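(* Suppose $\dim_{\mathbb{C}}N=n-m=4$, where $N=\mathrm{span}_{\mathbb{C}}\{I_{m+1},\dots,I_n\}$, and suppose the structure constants satisfy $\Upsilon^{m+1}_{m+1,m+2}\Upsilon^{m+2}_{m+2,m+3}=\Upsilon^{m+1}_{m+1,m+2}\Upsilon^{m+2}_{m+2,m+4}=\Upsilon^{m+1}_{m+1,m+3}\Upsilon^{m+2}_{m+3,m+4}=\Upsilon^{m+3}_{m+3,m+4}\Upsilon^{m+1}_{m+1,m+3}=\Upsilon^{m+1}_{m+2,m+3}\Upsilon^{m+1}_{m+3,m+4}=\Upsilon^{m+1}_{m+2,m+3}\Upsilon^{m+2}_{m+3,m+4}=\Upsilon^{m+1}_{m+2,m+3}\Upsilon^{m+3}_{m+3,m+4}=\Upsilon^{m+1}_{m+1,m+2}\Upsilon^{m+1}_{m+2,m+3}\Upsilon^{m+2}_{m+3,m+4}=\Upsilon^{m+1}_{m+1,m+2}\Upsilon^{m+1}_{m+2,m+3}\Upsilon^{m+3}_{m+3,m+4}=\Upsilon^{m+2}_{m+2,m+3}\Upsilon^{m+1}_{m+3,m+4}=\Upsilon^{m+2}_{m+2,m+3}\Upsilon^{m+3}_{m+3,m+4}=\Upsilon^{m+2}_{m+2,m+3}\Upsilon^{m+1}_{m+1,m+2}\Upsilon^{m+1}_{m+3,m+4}=\Upsilon^{m+2}_{m+2,m+3}\Upsilon^{m+1}_{m+1,m+2}\Upsilon^{m+2}_{m+3,m+4}=\Upsilon^{m+2}_{m+2,m+3}\Upsilon^{m+1}_{m+1,m+2}\Upsilon^{m+3}_{m+3,m+4}=0.$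 Then for every circle $C$ as described in the context, $\lambda:=\int_C\zeta^{-1}\,d\zeta=2\pi i$ (that is, $2\pi i$ times the unit of $\mathbb{A}_n^m$).
   Context: Fix natural numbers $m\le n$. $\mathbb{A}_n^m$ is a commutative associative algebra with unit over $\mathbb{C}$ with a basis $\{I_k\}_{k=1}^n$ satisfying: (1) for $r,s\in\{1,\dots,m\}$, $I_rI_s=0$ if $r\ne s$ and $I_rI_r=I_r$; (2) for $r,s\in\{m+1,\dots,n\}$, $I_rI_s=\sum_{k=\max\{r,s\}+1}^{n}\Upsilon^{s}_{r,k}I_k$ with constants $\Upsilon^s_{r,k}\in\mathbb{C}$ (so $\Upsilon^s_{r,k}$ is the coefficient of $I_k$ in $I_rI_s$); (3) for each $s\in\{m+1,\dots,n\}$ there is a unique $u_s\in\{1,\dots,m\}$ such that for $r\in\{1,\dots,m\}$, $I_rI_s=I_s$ if $r=u_s$ and $0$ otherwise. Unit $1=\sum_{u=1}^mI_u$; $\mathbb{A}_n^m=S\oplus_sN$ with $S=\mathrm{span}\{I_1,\dots,I_m\}$, $N=\mathrm{span}\{I_{m+1},\dots,I_n\}$. $f_u(\sum_k\lambda_kI_k)=\lambda_u$. Let $e_1=1$, $e_2=\sum_ka_kI_k$, $e_3=\sum_kb_kI_k$ ($a_k,b_k\in\mathbb{C}$) be linearly independent over $\mathbb{R}$; $\zeta=xe_1+ye_2+ze_3$ ($x,y,z\in\mathbb{R}$), $E_3$ their real span. Standing assumption: $f_u(E_3)=\mathbb{C}$ for all $u=1,\dots,m$. $\zeta$ is non-invertible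 exactly when $(x,y,z)$ lies on one of the lines $L_u=\{x+y\,\mathrm{Re}\,a_u+z\,\mathrm{Re}\,b_u=0,\ y\,\mathrm{Im}\,a_u+z\,\mathrm{Im}\,b_u=0\}$. The circle: $C\subset E_3$ is $C=\{xe_1+ye_2+ze_3:(x,y,z)\in C'\}$ for a Euclidean circle $C'\subset\mathbb{R}^3$ of radius $R>0$ centered at the origin, such that for every $u$ the image $f_u(C)$ is a positively oriented closed Jordan curve in $\mathbb{C}$ bounding a domain containing $0$. Integral: for a Jordan rectifiable curve $\gamma$ and continuous $\Psi=\sum_k(U_k+iV_k)I_k$ on $\gamma_\zeta$, $\int_{\gamma_\zeta}\Psi d\zeta:=\sum_kI_k\int_\gamma(U_k+iV_k)dx+\sum_ke_2I_k\int_\gamma(U_k+iV_k)dy+\sum_ke_3I_k\int_\gamma(U_k+iV_k)dz$. *)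

(* Defs.v *)
From Stdlib Require Import Reals.
From Coquelicot Require Import Coquelicot.
Open Scope R_scope.

(* Elements of the algebra A_n^m are represented by their coordinate functions
   k |-> lambda_k in the basis I_1, ..., I_n; only indices 1 <= k <= n matter. *)
Definition alg := nat -> C.

(* Structure constants: [c r s k] is the coefficient of I_k in I_r I_s. *)
Definition sconst := nat -> nat -> nat -> C.

(* Upsilon^s_{r,k} := coefficient of I_k in I_r I_s. *)
Definition Ups (c : sconst) (s r k : nat) : C := c r s k.

Definition csum (f : nat -> C) (lo hi : nat) : C := sum_n_m f lo hi.

Definition amul (n : nat) (c : sconst) (a b : alg) : alg :=
  fun k => csum (fun r => csum (fun s => (a r * b s * c r s k)%C) 1 n) 1 n.

Definition aadd (a b : alg) : alg := fun k => (a k + b k)%C.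
Definition ascal (x : R) (a : alg) : alg := fun k => (RtoC x * a k)%C.
Definition cscal (z : C) (a : alg) : alg := fun k => (z * a k)%C.

Definition basis (j : nat) : alg := fun k => if Nat.eqb k j then 1%C else 0%C.

Definition aone (m : nat) : alg := fun k => if Nat.leb k m then 1%C else 0%C.

Definition aeq (n : nat) (a b : alg) : Prop := forall k, (1 <= k <= n)%nat -> a k = b k.

(* the axioms (1)-(3) of A_n^m, together with commutativity and associativity *)
Definition is_Anm (m n : nat) (c : sconst) : Prop :=
  (m <= n)%nat /\
  (* (1) *)
  (forall r s k, (1 <= r <= m)%nat -> (1 <= s <= m)%nat -> (1 <= k <= n)%nat ->
     c r s k = (if andb (Nat.eqb r s) (Nat.eqb k r) then 1%C else 0%C)) /\
  (* (2) *)
  (forall r s k, (m + 1 <= r <= n)%nat -> (m + 1 <= s <= n)%nat -> (1 <= k <= n)%nat ->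
     (k <= Nat.max r s)%nat -> c r s k = 0%C) /\
  (* (3) *)
  (forall s, (m + 1 <= s <= n)%nat -> exists u, (1 <= u <= m)%nat /\
     forall r, (1 <= r <= m)%nat -> aeq n (amul n c (basis r) (basis s))
        (if Nat.eqb r u then basis s else (fun _ => 0%C))) /\
  (forall r s k, (1 <= r <= n)%nat -> (1 <= s <= n)%nat -> (1 <= k <= n)%nat ->
     c r s k = c s r k) /\
  (forall a b d, aeq n (amul n c (amul n c a b) d) (amul n c a (amul n c b d))).

Definition f_ (u : nat) (a : alg) : C := a u.

Definition zeta (m : nat) (e2 e3 : alg) (x y z : R) : alg :=
  aadd (ascal x (aone m)) (aadd (ascal y e2) (ascal z e3)).

(* A parametrized circle C' in R^3 of radius rho centred at 0:
   t |-> rho (cos t p + sin t q), t in [0, 2 pi], with p, q orthonormal.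
   Every oriented circle of radius rho centred at the origin is of this form. *)
Definition orthonormal (p q : R * R * R) : Prop :=
  let '(p1, p2, p3) := p in let '(q1, q2, q3) := q in
  p1 * p1 + p2 * p2 + p3 * p3 = 1 /\ q1 * q1 + q2 * q2 + q3 * q3 = 1 /\
  p1 * q1 + p2 * q2 + p3 * q3 = 0.

Definition cx (rho : R) (p q : R * R * R) (t : R) : R :=
  let '(p1, _, _) := p in let '(q1, _, _) := q in rho * (cos t * p1 + sin t * q1).
Definition cy (rho : R) (p q : R * R * R) (t : R) : R :=
  let '(_, p2, _) := p in let '(_, q2, _) := q in rho * (cos t * p2 + sin t * q2).
Definition cz (rho : R) (p q : R * R * R) (t : R) : R :=
  let '(_, _, p3) := p in let '(_, _, q3) := q in rho * (cos t * p3 + sin t * q3).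
Definition dcx (rho : R) (p q : R * R * R) (t : R) : R :=
  let '(p1, _, _) := p in let '(q1, _, _) := q in rho * (- sin t * p1 + cos t * q1).
Definition dcy (rho : R) (p q : R * R * R) (t : R) : R :=
  let '(_, p2, _) := p in let '(_, q2, _) := q in rho * (- sin t * p2 + cos t * q2).
Definition dcz (rho : R) (p q : R * R * R) (t : R) : R :=
  let '(_, _, p3) := p in let '(_, _, q3) := q in rho * (- sin t * p3 + cos t * q3).

Definition zeta_C (m : nat) (e2 e3 : alg) (rho : R) (p q : R * R * R) (t : R) : alg :=
  zeta m e2 e3 (cx rho p q t) (cy rho p q t) (cz rho p q t).

Definition jordan_closed (g : R -> C) : Prop :=
  g 0 = g (2 * PI) /\
  (forall t, 0 <= t <= 2 * PI -> continuous g t) /\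
  (forall s t, 0 <= s < 2 * PI -> 0 <= t < 2 * PI -> g s = g t -> s = t).

Definition winding_number_0 (g : R -> C) (w : Z) : Prop :=
  (forall t, 0 <= t <= 2 * PI -> g t <> 0%C) /\
  exists theta : R -> R,
    (forall t, 0 <= t <= 2 * PI -> continuous theta t) /\
    (forall t, 0 <= t <= 2 * PI ->
       g t = (RtoC (Cmod (g t)) * (cos (theta t), sin (theta t)))%C) /\
    theta (2 * PI) - theta 0 = 2 * PI * IZR w.

(* g is a positively oriented Jordan curve bounding a domain containing 0 *)
Definition pos_jordan_around_0 (g : R -> C) : Prop :=
  jordan_closed g /\ winding_number_0 g 1.

Definition CRInt (f : R -> C) (a b : R) : C :=
  (RInt (fun t => Re (f t)) a b, RInt (fun t => Im (f t)) a b).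

Definition curve_integral (n : nat) (c : sconst) (e2 e3 : alg) (rho : R)
    (p q : R * R * R) (Psi : R -> alg) : alg :=
  let Lx : alg := fun k => CRInt (fun t => (Psi t k * RtoC (dcx rho p q t))%C) 0 (2 * PI) in
  let Ly : alg := fun k => CRInt (fun t => (Psi t k * RtoC (dcy rho p q t))%C) 0 (2 * PI) in
  let Lz : alg := fun k => CRInt (fun t => (Psi t k * RtoC (dcz rho p q t))%C) 0 (2 * PI) in
  aadd Lx (aadd (amul n c e2 Ly) (amul n c e3 Lz)).

(* Main.v *)
Require Import Defs.
From Stdlib Require Import Reals Lia Arith Lra Setoid Ring Morphisms.
From Coquelicot Require Import Coquelicot.
Open Scope R_scope.

Lemma csum_ext (f g : nat -> C) lo hi :
  (forall k, (lo <= k <= hi)%nat -> f k = g k) -> csum f lo hi = csum g lo hi.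
Proof. intros H; unfold csum; apply sum_n_m_ext_loc; auto. Qed.

Lemma csum_zero (f : nat -> C) lo hi :
  (forall k, (lo <= k <= hi)%nat -> f k = 0%C) -> csum f lo hi = 0%C.
Proof.
  intros H. rewrite (csum_ext f (fun _ => @zero C_AbelianGroup)); auto.
  unfold csum; apply (@sum_n_m_const_zero C_AbelianGroup).
Qed.

Lemma csum_plus (f g : nat -> C) lo hi :
  csum (fun k => (f k + g k)%C) lo hi = (csum f lo hi + csum g lo hi)%C.
Proof. unfold csum. apply (@sum_n_m_plus C_AbelianGroup). Qed.

Lemma csum_mult_l (z : C) (f : nat -> C) lo hi :
  csum (fun k => (z * f k)%C) lo hi = (z * csum f lo hi)%C.
Proof. unfold csum. apply (@sum_n_m_mult_l C_Ring). Qed.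

Lemma csum_mult_r (z : C) (f : nat -> C) lo hi :
  csum (fun k => (f k * z)%C) lo hi = (csum f lo hi * z)%C.
Proof. unfold csum. apply (@sum_n_m_mult_r C_Ring). Qed.

Lemma csum_single (f : nat -> C) lo hi j :
  (lo <= j <= hi)%nat -> (forall k, (lo <= k <= hi)%nat -> k <> j -> f k = 0%C) ->
  csum f lo hi = f j.
Proof.
  intros Hj H. unfold csum.
  destruct (Nat.eq_dec lo j) as [<-|Hne].
  - rewrite sum_Sn_m by lia.
    rewrite (sum_n_m_ext_loc _ (fun _ => @zero C_AbelianGroup)).
    + rewrite sum_n_m_const_zero. apply (@plus_zero_r C_AbelianGroup).
    + intros k Hk; apply H; lia.
  - rewrite (sum_n_m_Chasles _ lo (j - 1) hi) by lia.
    rewrite (sum_n_m_ext_loc _ (fun _ => @zero C_AbelianGroup) lo (j-1)).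
    2:{ intros k Hk; apply H; lia. }
    rewrite sum_n_m_const_zero, (@plus_zero_l C_AbelianGroup).
    replace (S (j-1)) with j by lia.
    rewrite sum_Sn_m by lia.
    rewrite (sum_n_m_ext_loc _ (fun _ => @zero C_AbelianGroup)).
    + rewrite sum_n_m_const_zero. apply (@plus_zero_r C_AbelianGroup).
    + intros k Hk; apply H; lia.
Qed.

Lemma csum_swap (f : nat -> nat -> C) a b lo hi :
  csum (fun r => csum (fun s => f r s) a b) lo hi =
  csum (fun s => csum (fun r => f r s) lo hi) a b.
Proof.
  destruct (le_lt_dec lo hi) as [Hle|Hlt].
  - replace hi with (lo + (hi - lo))%nat by lia.
    generalize (hi - lo)%nat as d. induction d.
    + rewrite Nat.add_0_r. unfold csum at 1. rewrite sum_n_n.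
      apply csum_ext; intros. unfold csum; now rewrite sum_n_n.
    + unfold csum at 1. rewrite Nat.add_succ_r, sum_n_Sm by lia.
      fold (csum (fun r => csum (fun s => f r s) a b) lo (lo + d)).
      rewrite IHd. symmetry.
      rewrite (csum_ext _ (fun s => (csum (fun r => f r s) lo (lo + d) + f (S (lo+d)) s)%C)).
      * now rewrite csum_plus.
      * intros k _. unfold csum. rewrite sum_n_Sm by lia. reflexivity.
  - unfold csum at 1. rewrite sum_n_m_zero by lia. symmetry.
    apply csum_zero. intros; unfold csum; now rewrite sum_n_m_zero by lia.
Qed.

Lemma csum_split (f : nat -> C) m n :
  (m <= n)%nat -> csum f 1 n = (csum f 1 m + csum f (S m) n)%C.
Proof.
  intros H. unfold csum.
  apply (@sum_n_m_Chasles C_AbelianGroup); lia.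
Qed.


Definition azero : alg := fun _ => 0%C.
Definition aopp (a : alg) : alg := fun k => (- a k)%C.
Definition asub (a b : alg) : alg := aadd a (aopp b).

Section Alg.
Variables (m n : nat) (c : sconst).
Hypothesis HA : is_Anm m n c.

Lemma Hmn : (m <= n)%nat. Proof. apply HA. Qed.

Lemma amul_basis r s k : (1 <= r <= n)%nat -> (1 <= s <= n)%nat ->
  amul n c (basis r) (basis s) k = c r s k.
Proof.
  intros Hr Hs. unfold amul.
  rewrite (csum_single _ 1 n r); auto.
  - rewrite (csum_single _ 1 n s); auto.
    + unfold basis; rewrite !Nat.eqb_refl; ring.
    + intros k' _ Hk'. unfold basis. rewrite Nat.eqb_refl.
      destruct (Nat.eqb_spec k' s); [lia|ring].
  - intros k' _ Hk'. apply csum_zero. intros. unfold basis.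
    destruct (Nat.eqb_spec k' r); [lia|ring].
Qed.

Lemma cT1 r s k : (1 <= k <= m)%nat -> (1 <= r <= n)%nat -> (1 <= s <= n)%nat ->
  c r s k = if andb (Nat.eqb r k) (Nat.eqb s k) then 1%C else 0%C.
Proof.
  destruct HA as [Hmn' [H1 [H2 [H3 [Hc _]]]]].
  intros Hk Hr Hs.
  assert (RS : forall r s, (1 <= r <= m)%nat -> (m < s <= n)%nat -> c r s k = 0%C).
  { intros r' s' Hr' Hs'. destruct (H3 s') as [u [Hu Hu']]; [lia|].
    specialize (Hu' r' Hr' k ltac:(lia)). rewrite amul_basis in Hu' by lia.
    rewrite Hu'. destruct (Nat.eqb r' u); [|reflexivity].
    unfold basis. destruct (Nat.eqb_spec k s'); [lia|reflexivity]. }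
  destruct (le_lt_dec r m); destruct (le_lt_dec s m).
  - rewrite H1 by lia.
    destruct (Nat.eqb_spec r s); destruct (Nat.eqb_spec k r);
      destruct (Nat.eqb_spec r k); destruct (Nat.eqb_spec s k); simpl; try lia; reflexivity.
  - rewrite RS by lia. destruct (Nat.eqb_spec s k); [lia|].
    now rewrite Bool.andb_false_r.
  - rewrite Hc by lia. rewrite RS by lia. destruct (Nat.eqb_spec r k); [lia|reflexivity].
  - rewrite H2 by lia. destruct (Nat.eqb_spec r k); [lia|reflexivity].
Qed.

Lemma cT3 r s k : (1 <= r <= m)%nat -> (1 <= s <= m)%nat -> (m < k <= n)%nat ->
  c r s k = 0%C.
Proof.
  destruct HA as [Hmn' [H1 _]]. intros. rewrite H1 by lia.
  destruct (Nat.eqb_spec k r); [lia|]. now rewrite Bool.andb_false_r.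
Qed.

Lemma cT4 s k : (1 <= k <= n)%nat -> (1 <= s <= n)%nat ->
  csum (fun r => c r s k) 1 m = if Nat.eqb s k then 1%C else 0%C.
Proof.
  destruct HA as [Hmn' [H1 [H2 [H3 [Hc _]]]]].
  intros Hk Hs. destruct (le_lt_dec k m).
  - destruct (Nat.eqb_spec s k).
    + subst. rewrite (csum_single _ 1 m k).
      * rewrite cT1 by lia. now rewrite Nat.eqb_refl.
      * lia.
      * intros k0 Hk0 Hne. rewrite cT1 by lia.
        destruct (Nat.eqb_spec k0 k); [lia|reflexivity].
    + apply csum_zero. intros. rewrite cT1 by lia.
      destruct (Nat.eqb_spec s k); [lia|]. now rewrite Bool.andb_false_r.
  - destruct (le_lt_dec s m).
    + destruct (Nat.eqb_spec s k); [lia|]. apply csum_zero; intros; apply cT3; lia.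
    + destruct (H3 s) as [u [Hu Hu']]; [lia|].
      rewrite (csum_single _ 1 m u); auto.
      * specialize (Hu' u Hu k ltac:(lia)). rewrite amul_basis in Hu' by lia.
        rewrite Hu', Nat.eqb_refl. unfold basis. now rewrite Nat.eqb_sym.
      * intros r Hr Hru. specialize (Hu' r Hr k ltac:(lia)).
        rewrite amul_basis in Hu' by lia. rewrite Hu'.
        destruct (Nat.eqb_spec r u); [lia|reflexivity].
Qed.

Lemma mulS a b u : (1 <= u <= m)%nat -> amul n c a b u = (a u * b u)%C.
Proof.
  intros Hu. pose proof Hmn. unfold amul.
  rewrite (csum_single _ 1 n u).
  2: lia.
  2:{ intros k Hk Hne. apply csum_zero. intros s Hs.
      rewrite cT1 by lia. destruct (Nat.eqb_spec k u); [lia|simpl; ring]. }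
  rewrite (csum_single _ 1 n u).
  2: lia.
  2:{ intros k Hk Hne. rewrite cT1 by lia.
      destruct (Nat.eqb_spec k u); destruct (Nat.eqb_spec u u); simpl; try lia; ring. }
  rewrite cT1 by lia. rewrite Nat.eqb_refl. simpl. ring.
Qed.

Lemma amul_ext a a' b b' k : aeq n a a' -> aeq n b b' ->
  amul n c a b k = amul n c a' b' k.
Proof.
  intros Ha Hb. unfold amul. apply csum_ext; intros r Hr; apply csum_ext; intros s Hs.
  now rewrite Ha, Hb.
Qed.

Lemma amul_1_l x : aeq n (amul n c (aone m) x) x.
Proof.
  intros k Hk. pose proof Hmn. unfold amul.
  rewrite (csum_split _ m n) by lia.
  rewrite (csum_zero _ (S m) n).
  2:{ intros r Hr. apply csum_zero. intros. unfold aone.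
      destruct (Nat.leb_spec r m); [lia|ring]. }
  rewrite (csum_ext _ (fun r => csum (fun s => x s * c r s k)%C 1 n) 1 m).
  2:{ intros r Hr. apply csum_ext; intros. unfold aone.
      destruct (Nat.leb_spec r m); [ring|lia]. }
  rewrite csum_swap.
  rewrite (csum_ext _ (fun s => x s * (if Nat.eqb s k then 1 else 0))%C).
  2:{ intros s Hs. rewrite csum_mult_l. now rewrite cT4. }
  rewrite (csum_single _ 1 n k).
  - rewrite Nat.eqb_refl. ring.
  - lia.
  - intros j Hj Hne. destruct (Nat.eqb_spec j k); [lia|ring].
Qed.

Lemma amul_comm a b : aeq n (amul n c a b) (amul n c b a).
Proof.
  destruct HA as [_ [_ [_ [_ [Hc _]]]]].
  intros k Hk. unfold amul. rewrite csum_swap.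
  apply csum_ext; intros; apply csum_ext; intros. rewrite Hc by lia. ring.
Qed.

Lemma amul_assoc a b d : aeq n (amul n c (amul n c a b) d) (amul n c a (amul n c b d)).
Proof. apply HA. Qed.

Lemma amul_distr_l a b d : aeq n (amul n c (aadd a b) d) (aadd (amul n c a d) (amul n c b d)).
Proof.
  intros k Hk. unfold amul, aadd. rewrite <- csum_plus. apply csum_ext; intros.
  rewrite <- csum_plus. apply csum_ext; intros. ring.
Qed.

Lemma aeq_setoid : Setoid_Theory alg (aeq n).
Proof.
  split.
  - intros x k _; reflexivity.
  - intros x y H k Hk; symmetry; auto.
  - intros x y z H1 H2 k Hk; rewrite H1, H2; auto.
Qed.

Lemma aeq_ext : ring_eq_ext aadd (amul n c) aopp (aeq n).
Proof.
  split.
  - intros x x' Hx y y' Hy k Hk. unfold aadd. now rewrite Hx, Hy.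
  - intros x x' Hx y y' Hy k Hk. now apply amul_ext.
  - intros x x' Hx k Hk. unfold aopp. now rewrite Hx.
Qed.

Lemma alg_ring : ring_theory azero (aone m) aadd (amul n c) asub aopp (aeq n).
Proof.
  split.
  - intros x k _. unfold aadd, azero. ring.
  - intros x y k _. unfold aadd. ring.
  - intros x y z k _. unfold aadd. ring.
  - apply amul_1_l.
  - apply amul_comm.
  - intros x y z k Hk. symmetry. apply amul_assoc; auto.
  - apply amul_distr_l.
  - intros x y k _. reflexivity.
  - intros x k _. unfold aadd, aopp, azero. ring.
Qed.

Add Ring AlgRing : alg_ring (setoid aeq_setoid aeq_ext).

Goal forall x y : alg, aeq n (amul n c (aadd x y) (aadd x y)) (aadd (amul n c x x) (aadd (amul n c (aadd (aone m) (aone m)) (amul n c x y)) (amul n c y y))).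
intros. ring. Qed.

End Alg.


Add Parametric Relation (n : nat) : alg (aeq n)
  reflexivity proved by (fun x k _ => eq_refl)
  symmetry proved by (fun x y H k Hk => eq_sym (H k Hk))
  transitivity proved by (fun x y z H1 H2 k Hk => eq_trans (H1 k Hk) (H2 k Hk))
  as aeq_rel.

Add Parametric Morphism (n : nat) (c : sconst) : (amul n c)
  with signature (aeq n) ==> (aeq n) ==> (aeq n) as amul_mor.
Proof. intros; intros k Hk; now apply amul_ext. Qed.

Add Parametric Morphism (n : nat) : aadd
  with signature (aeq n) ==> (aeq n) ==> (aeq n) as aadd_mor.
Proof. intros x x' Hx y y' Hy k Hk; unfold aadd; now rewrite Hx, Hy. Qed.

Add Parametric Morphism (n : nat) : aopp
  with signature (aeq n) ==> (aeq n) as aopp_mor.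
Proof. intros x x' Hx k Hk; unfold aopp; now rewrite Hx. Qed.

Definition inN (m : nat) (a : alg) := forall k, (1 <= k <= m)%nat -> a k = 0%C.
Definition suppS (m : nat) (a : alg) := forall k, (m < k)%nat -> a k = 0%C.

Section Alg2.
Variables (m n : nat) (c : sconst).
Hypothesis HA : is_Anm m n c.
Add Ring AlgRing2 : (alg_ring m n c HA) (setoid (aeq_setoid n) (aeq_ext n c)).

Lemma filt (j : nat) (a b : alg) : (m <= j)%nat -> (forall k, (1 <= k <= j)%nat -> (k <= n)%nat -> a k = 0%C) -> inN m b ->
  forall k, (1 <= k <= S j)%nat -> (k <= n)%nat -> amul n c a b k = 0%C.
Proof.
  destruct HA as [Hmn' [H1 [H2 _]]].
  intros Hj Ha Hb k Hk Hkn. unfold amul. apply csum_zero. intros r Hr.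
  destruct (le_lt_dec r j). { apply csum_zero; intros. rewrite Ha by lia. ring. }
  apply csum_zero. intros s Hs. destruct (le_lt_dec s m).
  { rewrite Hb by lia. ring. }
  rewrite H2 by lia. ring.
Qed.

Lemma pow5 V W : (n <= m + 4)%nat -> inN m V -> inN m W ->
  aeq n (amul n c (amul n c (amul n c (amul n c V W) W) W) W) azero.
Proof.
  intros Hn HV HW k Hk. unfold azero.
  refine (filt (m+3) _ W _ _ HW k _ _); try lia.
  intros k1 Hk1 Hk1'. refine (filt (m+2) _ W _ _ HW k1 _ _); try lia.
  intros k2 Hk2 Hk2'. refine (filt (m+1) _ W _ _ HW k2 _ _); try lia.
  intros k3 Hk3 Hk3'. refine (filt m _ W _ _ HW k3 _ _); try lia.
  intros; apply HV; lia.
Qed.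

Lemma prodS a b : suppS m a -> suppS m b -> forall k, (m < k <= n)%nat -> amul n c a b k = 0%C.
Proof.
  intros Ha Hb k Hk. unfold amul. apply csum_zero. intros r Hr.
  apply csum_zero. intros s Hs.
  destruct (le_lt_dec r m); [|rewrite Ha by lia; ring].
  destruct (le_lt_dec s m); [|rewrite Hb by lia; ring].
  rewrite (cT3 m n c HA) by lia. ring.
Qed.

Lemma key (D Dinv D' Dinv' Z Z' W W' Phi : alg) :
  aeq n (amul n c D Dinv) (aone m) ->
  aeq n (aadd (amul n c D' Dinv) (amul n c D Dinv')) azero ->
  aeq n W (asub (amul n c Dinv Z) (aone m)) ->
  aeq n W' (aadd (amul n c Dinv' Z) (amul n c Dinv Z')) ->
  aeq n (amul n c (amul n c (amul n c (amul n c W W) W) W) W) azero ->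
  aeq n (amul n c (amul n c (amul n c (amul n c W' W) W) W) W) azero ->
  aeq n Phi (amul n c Dinv (aadd (aone m) (aadd (aopp W) (aadd (amul n c W W)
       (aadd (aopp (amul n c (amul n c W W) W)) (amul n c (amul n c (amul n c W W) W) W)))))) ->
  aeq n (amul n c Z Phi) (aone m) /\
  aeq n (amul n c Phi Z') (aadd (amul n c Dinv D')
     (amul n c (aadd (aone m) (aadd (aopp W) (aadd (amul n c W W)
       (aopp (amul n c (amul n c W W) W))))) W')).
Proof.
  intros H1 H2 HW HW' H5 H5' HPhi.
  assert (HZ : aeq n Z (amul n c D (aadd (aone m) W))).
  { transitivity (amul n c (amul n c D Dinv) Z). { rewrite H1. ring. }
    rewrite HW. unfold asub. ring. }
  assert (HZ' : aeq n Z' (aadd (amul n c D' (aadd (aone m) W)) (amul n c D W'))).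
  { transitivity (aadd (amul n c (aadd (amul n c D' Dinv) (amul n c D Dinv')) Z)
                        (amul n c (amul n c D Dinv) Z')).
    { rewrite H1, H2. ring. }
    rewrite HW, HW'. unfold asub. ring. }
  split.
  - rewrite HPhi, HZ.
    transitivity (amul n c (amul n c D Dinv)
       (aadd (aone m) (amul n c (amul n c (amul n c (amul n c W W) W) W) W))).
    { ring. }
    rewrite H1, H5. ring.
  - rewrite HPhi, HZ'.
    transitivity (aadd (amul n c (amul n c Dinv D')
       (aadd (aone m) (amul n c (amul n c (amul n c (amul n c W W) W) W) W)))
       (aadd (amul n c (amul n c D Dinv) (amul n c (aadd (aone m) (aadd (aopp W) (aadd (amul n c W W)
       (aopp (amul n c (amul n c W W) W))))) W'))
        (amul n c (amul n c D Dinv) (amul n c (amul n c (amul n c (amul n c W' W) W) W) W)))).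
    { ring. }
    rewrite H1, H5, H5'. ring.
Qed.

End Alg2.


Lemma rd_mul (f g : R -> R) t df dg : is_derive f t df -> is_derive g t dg ->
  is_derive (fun s => f s * g s) t (df * g t + f t * dg).
Proof. intros H1 H2. apply (is_derive_mult f g t df dg H1 H2). intros; apply Rmult_comm. Qed.
Lemma rd_plus (f g : R -> R) t df dg : is_derive f t df -> is_derive g t dg ->
  is_derive (fun s => f s + g s) t (df + dg).
Proof. intros H1 H2. apply (is_derive_plus f g t df dg H1 H2). Qed.
Lemma rd_opp (f : R -> R) t df : is_derive f t df -> is_derive (fun s => - f s) t (- df).
Proof. intros H1. apply (is_derive_opp f t df H1). Qed.
Lemma rd_const (a : R) t : is_derive (fun _ => a) t 0.
Proof. apply (is_derive_const a t). Qed.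
Lemma rd_inv (f : R -> R) t df : is_derive f t df -> f t <> 0 ->
  is_derive (fun s => / f s) t (- df / (f t * f t)).
Proof. intros H1 H2. replace (f t * f t) with (f t ^ 2) by ring. now apply is_derive_inv. Qed.
Lemma rd_ext (f g : R -> R) t d d' : is_derive f t d -> (forall s, f s = g s) -> d = d' ->
  is_derive g t d'.
Proof. intros H1 H2 <-. now apply (is_derive_ext f g). Qed.
Lemma rd_cont (f : R -> R) t d : is_derive f t d -> continuous f t.
Proof. intros H. apply (ex_derive_continuous (K:=R_AbsRing) (V:=R_NormedModule)). now exists d. Qed.

Lemma rc_mul (f g : R -> R) t : continuous f t -> continuous g t -> continuous (fun s => f s * g s) t.
Proof. intros; now apply (continuous_mult f g). Qed.
Lemma rc_plus (f g : R -> R) t : continuous f t -> continuous g t -> continuous (fun s => f s + g s) t.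
Proof. intros; now apply (continuous_plus f g). Qed.
Lemma rc_opp (f : R -> R) t : continuous f t -> continuous (fun s => - f s) t.
Proof. intros; now apply (continuous_opp f). Qed.
Lemma rc_inv (f : R -> R) t : continuous f t -> f t <> 0 -> continuous (fun s => / f s) t.
Proof. intros; now apply continuous_Rinv_comp. Qed.
Lemma rc_ext (f g : R -> R) t : continuous f t -> (forall s, f s = g s) -> continuous g t.
Proof. intros H1 H2. now apply (continuous_ext f g). Qed.

Definition ccont (f : R -> C) := forall t, continuous (fun s => fst (f s)) t /\ continuous (fun s => snd (f s)) t.
Definition cd (f f' : R -> C) :=
  (forall t, is_derive (fun s => fst (f s)) t (fst (f' t)) /\ is_derive (fun s => snd (f s)) t (snd (f' t)))
  /\ ccont f'.

Lemma ccont_ext f g : ccont f -> (forall t, f t = g t) -> ccont g.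
Proof.
  intros H E t. destruct (H t) as [H1 H2]. split.
  - apply (rc_ext _ _ t H1). intros; now rewrite E.
  - apply (rc_ext _ _ t H2). intros; now rewrite E.
Qed.
Lemma ccont_const z : ccont (fun _ => z).
Proof. intros t; split; apply continuous_const. Qed.
Lemma ccont_plus f g : ccont f -> ccont g -> ccont (fun t => (f t + g t)%C).
Proof. intros H1 H2 t. destruct (H1 t), (H2 t). simpl. split; now apply rc_plus. Qed.
Lemma ccont_opp f : ccont f -> ccont (fun t => (- f t)%C).
Proof. intros H1 t. destruct (H1 t). simpl. split; now apply rc_opp. Qed.
Lemma ccont_mult f g : ccont f -> ccont g -> ccont (fun t => (f t * g t)%C).
Proof.
  intros H1 H2 t. destruct (H1 t), (H2 t). simpl. split.
  - apply rc_plus; [apply rc_mul; auto|apply rc_opp, rc_mul; auto].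
  - apply rc_plus; apply rc_mul; auto.
Qed.
Lemma Nz (z : C) : z <> 0%C -> fst z ^ 2 + snd z ^ 2 <> 0.
Proof.
  intros H E. apply H. destruct z as [a b]. simpl in *.
  assert (a = 0 /\ b = 0) as [-> ->] by nra. reflexivity.
Qed.
Lemma ccont_inv f : ccont f -> (forall t, f t <> 0%C) -> ccont (fun t => (/ f t)%C).
Proof.
  intros H1 Hn t. destruct (H1 t). simpl.
  assert (C1 : continuous (fun s => / (fst (f s) ^ 2 + snd (f s) ^ 2)) t).
  { apply rc_inv; [|now apply Nz].
    simpl. apply rc_plus; apply rc_mul; auto; apply rc_mul; auto; apply continuous_const. }
  split.
  - apply rc_mul; auto.
  - apply rc_mul; auto. now apply rc_opp.
Qed.
Lemma ccont_real (x : R -> R) : (forall t, continuous x t) -> ccont (fun t => RtoC (x t)).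
Proof. intros H t. simpl. split; auto. apply continuous_const. Qed.

Lemma cd_ccont f f' : cd f f' -> ccont f.
Proof. intros [H _] t. destruct (H t). split; eapply rd_cont; eauto. Qed.
Lemma cd_ccont' f f' : cd f f' -> ccont f'.
Proof. intros [_ H]; auto. Qed.

Lemma cd_ext f f' g g' : cd f f' -> (forall t, f t = g t) -> (forall t, f' t = g' t) -> cd g g'.
Proof.
  intros [H Hc] E E'. split.
  - intros t. destruct (H t) as [Ha Hb]. split.
    + apply (rd_ext _ _ t _ _ Ha). intros; now rewrite E. now rewrite E'.
    + apply (rd_ext _ _ t _ _ Hb). intros; now rewrite E. now rewrite E'.
  - eapply ccont_ext; eauto.
Qed.
Lemma cd_const z : cd (fun _ => z) (fun _ => 0%C).
Proof. split. - intros; split; apply rd_const. - apply ccont_const. Qed.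
Lemma cd_plus f f' g g' : cd f f' -> cd g g' -> cd (fun t => (f t + g t)%C) (fun t => (f' t + g' t)%C).
Proof.
  intros [H1 C1] [H2 C2]. split.
  - intros t. destruct (H1 t), (H2 t). simpl. split; now apply rd_plus.
  - now apply ccont_plus.
Qed.
Lemma cd_opp f f' : cd f f' -> cd (fun t => (- f t)%C) (fun t => (- f' t)%C).
Proof.
  intros [H1 C1]. split.
  - intros t. destruct (H1 t). simpl. split; now apply rd_opp.
  - now apply ccont_opp.
Qed.
Lemma cd_mult f f' g g' : cd f f' -> cd g g' ->
  cd (fun t => (f t * g t)%C) (fun t => (f' t * g t + f t * g' t)%C).
Proof.
  intros Hf Hg. pose proof (cd_ccont _ _ Hf) as Cf. pose proof (cd_ccont _ _ Hg) as Cg.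
  destruct Hf as [H1 C1], Hg as [H2 C2]. split.
  - intros t. destruct (H1 t), (H2 t). simpl. split.
    + eapply rd_ext. apply rd_plus; [apply (rd_mul _ _ t _ _ H H3)|apply rd_opp, (rd_mul _ _ t _ _ H0 H4)].
      intros; simpl; ring. simpl; ring.
    + eapply rd_ext. apply rd_plus; [apply (rd_mul _ _ t _ _ H H4)|apply (rd_mul _ _ t _ _ H0 H3)].
      intros; simpl; ring. simpl; ring.
  - apply ccont_plus; apply ccont_mult; auto.
Qed.
Lemma cd_inv f f' : cd f f' -> (forall t, f t <> 0%C) ->
  cd (fun t => (/ f t)%C) (fun t => (- f' t / (f t * f t))%C).
Proof.
  intros Hf Hn. pose proof (cd_ccont _ _ Hf) as Cf. destruct Hf as [H1 C1]. split.
  - intros t. destruct (H1 t) as [Ha Hb]. pose proof (Nz _ (Hn t)) as HN.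
    assert (HN' : is_derive (fun s => fst (f s) ^ 2 + snd (f s) ^ 2) t
                   (2 * fst (f t) * fst (f' t) + 2 * snd (f t) * snd (f' t))).
    { eapply rd_ext. apply rd_plus; [apply (rd_mul _ _ t _ _ Ha Ha)|apply (rd_mul _ _ t _ _ Hb Hb)].
      intros; simpl; ring. simpl; ring. }
    pose proof (rd_inv _ _ _ HN' HN) as HI.
    split.
    + eapply rd_ext. apply (rd_mul _ _ t _ _ Ha HI). intros; simpl; reflexivity.
      destruct (f t) as [a b] eqn:Ef. destruct (f' t) as [a' b'] eqn:Ef'. simpl in *.
      field. split; [|nra]. intro E. apply HN. nra.
    + eapply rd_ext. apply (rd_mul _ _ t _ _ (rd_opp _ _ _ Hb) HI). intros; simpl; reflexivity.
      destruct (f t) as [a b] eqn:Ef. destruct (f' t) as [a' b'] eqn:Ef'. simpl in *.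
      field. split; [|nra]. intro E. apply HN. nra.
  - apply ccont_mult; [now apply ccont_opp|]. apply ccont_inv.
    + now apply ccont_mult.
    + intros t. now apply Cmult_neq_0.
Qed.
Lemma cd_real (x x' : R -> R) : (forall t, is_derive x t (x' t)) -> (forall t, continuous x' t) ->
  cd (fun t => RtoC (x t)) (fun t => RtoC (x' t)).
Proof.
  intros H1 H2. split.
  - intros t; simpl; split; auto; apply rd_const.
  - now apply ccont_real.
Qed.
Lemma cd_csum (f f' : nat -> R -> C) lo hi :
  (forall j, (lo <= j <= hi)%nat -> cd (f j) (f' j)) ->
  cd (fun t => csum (fun j => f j t) lo hi) (fun t => csum (fun j => f' j t) lo hi).
Proof.
  intros H. destruct (le_lt_dec lo hi) as [Hle|Hlt].
  - replace hi with (lo + (hi - lo))%nat in * by lia.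
    induction (hi - lo)%nat as [|d IH].
    + rewrite Nat.add_0_r in *. unfold csum.
      eapply cd_ext. apply (H lo). lia. intros; now rewrite sum_n_n. intros; now rewrite sum_n_n.
    + eapply cd_ext. apply cd_plus. apply IH. intros; apply H; lia. lia. apply (H (S (lo + d))). lia.
      intros; unfold csum; rewrite Nat.add_succ_r, sum_n_Sm by lia; reflexivity.
      intros; unfold csum; rewrite Nat.add_succ_r, sum_n_Sm by lia; reflexivity.
  - eapply cd_ext. apply (cd_const 0%C).
    intros; unfold csum; now rewrite sum_n_m_zero by lia.
    intros; unfold csum; now rewrite sum_n_m_zero by lia.
Qed.


Definition acd (n : nat) (F F' : R -> alg) :=
  forall k, (1 <= k <= n)%nat -> cd (fun t => F t k) (fun t => F' t k).

Lemma acd_ext n F F' G G' : acd n F F' -> (forall t, aeq n (F t) (G t)) ->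
  (forall t, aeq n (F' t) (G' t)) -> acd n G G'.
Proof. intros H E E' k Hk. eapply cd_ext. apply (H k Hk). intros; now apply E. intros; now apply E'. Qed.
Lemma acd_add n F F' G G' : acd n F F' -> acd n G G' ->
  acd n (fun t => aadd (F t) (G t)) (fun t => aadd (F' t) (G' t)).
Proof. intros H1 H2 k Hk. unfold aadd. apply (cd_plus _ _ _ _ (H1 k Hk) (H2 k Hk)). Qed.
Lemma acd_opp n F F' : acd n F F' -> acd n (fun t => aopp (F t)) (fun t => aopp (F' t)).
Proof. intros H1 k Hk. unfold aopp. apply (cd_opp _ _ (H1 k Hk)). Qed.
Lemma acd_const n a : acd n (fun _ => a) (fun _ => azero).
Proof. intros k Hk. apply cd_const. Qed.
Lemma acd_mul n c F F' G G' : acd n F F' -> acd n G G' ->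
  acd n (fun t => amul n c (F t) (G t))
        (fun t => aadd (amul n c (F' t) (G t)) (amul n c (F t) (G' t))).
Proof.
  intros H1 H2 k Hk. unfold amul.
  eapply cd_ext.
  - eapply (cd_csum (fun r t => csum (fun s => (F t r * G t s * c r s k)%C) 1 n) _ 1 n).
    intros r Hr.
    eapply (cd_csum (fun s t => (F t r * G t s * c r s k)%C) _ 1 n). intros s Hs.
    apply cd_mult. apply cd_mult. apply (H1 r); lia. apply (H2 s); lia. apply cd_const.
  - reflexivity.
  - intros t. unfold aadd. rewrite <- csum_plus. apply csum_ext; intros.
    rewrite <- csum_plus. apply csum_ext; intros. ring.
Qed.
Lemma acd_cd n F F' k : acd n F F' -> (1 <= k <= n)%nat -> cd (fun t => F t k) (fun t => F' t k).
Proof. intros H Hk; apply H; auto. Qed.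

Lemma trig_d (rho a b t : R) :
  is_derive (fun t => rho * (cos t * a + sin t * b)) t (rho * (- sin t * a + cos t * b)).
Proof. auto_derive; auto. ring. Qed.
Lemma trig_d' (rho a b t : R) :
  is_derive (fun t => rho * (- sin t * a + cos t * b)) t (- (rho * (cos t * a + sin t * b))).
Proof. auto_derive; auto. ring. Qed.
Lemma trig_cd (rho a b : R) :
  cd (fun t => RtoC (rho * (cos t * a + sin t * b))) (fun t => RtoC (rho * (- sin t * a + cos t * b))).
Proof.
  apply cd_real. intros; apply trig_d. intros; eapply rd_cont; apply trig_d'.
Qed.


Definition is_CRInt (f : R -> C) (v : C) :=
  is_RInt (fun t => fst (f t)) 0 (2 * PI) (fst v) /\ is_RInt (fun t => snd (f t)) 0 (2 * PI) (snd v).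

Lemma CRInt_of f v : is_CRInt f v -> CRInt f 0 (2 * PI) = v.
Proof.
  intros [H1 H2]. unfold CRInt, Re, Im.
  rewrite (is_RInt_unique (V:=R_CompleteNormedModule) _ _ _ _ H1).
  rewrite (is_RInt_unique (V:=R_CompleteNormedModule) _ _ _ _ H2).
  destruct v; reflexivity.
Qed.

Lemma is_CRInt_uniq f v w : is_CRInt f v -> is_CRInt f w -> v = w.
Proof. intros H1 H2. rewrite <- (CRInt_of _ _ H1). now apply CRInt_of. Qed.

Lemma is_CRInt_ext f g v : (forall t, f t = g t) -> is_CRInt f v -> is_CRInt g v.
Proof.
  intros E [H1 H2]. split.
  - apply (is_RInt_ext (V:=R_NormedModule) (fun t => fst (f t))); auto. intros; now rewrite E.
  - apply (is_RInt_ext (V:=R_NormedModule) (fun t => snd (f t))); auto. intros; now rewrite E.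
Qed.

Lemma is_CRInt_val f v w : is_CRInt f v -> v = w -> is_CRInt f w.
Proof. intros H <-; auto. Qed.

Lemma is_CRInt_plus f g v w : is_CRInt f v -> is_CRInt g w ->
  is_CRInt (fun t => (f t + g t)%C) (v + w)%C.
Proof.
  intros [H1 H2] [H3 H4]. split.
  - exact (is_RInt_plus (V:=R_NormedModule) _ _ _ _ _ _ H1 H3).
  - exact (is_RInt_plus (V:=R_NormedModule) _ _ _ _ _ _ H2 H4).
Qed.

Lemma is_CRInt_cmul (z : C) f v : is_CRInt f v -> is_CRInt (fun t => (z * f t)%C) (z * v)%C.
Proof.
  intros [H1 H2]. split.
  - exact (is_RInt_plus (V:=R_NormedModule) _ _ _ _ _ _
      (is_RInt_scal _ _ _ (fst z) _ H1) (is_RInt_opp _ _ _ _ (is_RInt_scal _ _ _ (snd z) _ H2))).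
  - exact (is_RInt_plus (V:=R_NormedModule) _ _ _ _ _ _
      (is_RInt_scal _ _ _ (fst z) _ H2) (is_RInt_scal _ _ _ (snd z) _ H1)).
Qed.

Lemma is_RInt_zero0 : is_RInt (fun _ : R => 0) 0 (2 * PI) 0.
Proof.
  pose proof (is_RInt_const (V:=R_NormedModule) 0 (2*PI) 0) as H.
  match type of H with is_RInt _ _ _ ?v => replace v with 0 in H end. exact H.
  unfold scal; simpl; unfold mult; simpl; ring.
Qed.

Lemma is_CRInt_zero : is_CRInt (fun _ => 0%C) 0%C.
Proof. split; simpl; apply is_RInt_zero0. Qed.

Lemma is_CRInt_csum (f : nat -> R -> C) (v : nat -> C) lo hi :
  (forall j, (lo <= j <= hi)%nat -> is_CRInt (f j) (v j)) ->
  is_CRInt (fun t => csum (fun j => f j t) lo hi) (csum v lo hi).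
Proof.
  intros H. destruct (le_lt_dec lo hi) as [Hle|Hlt].
  - replace hi with (lo + (hi - lo))%nat in * by lia.
    induction (hi - lo)%nat as [|d IH].
    + rewrite Nat.add_0_r in *. unfold csum.
      eapply is_CRInt_ext. 2: eapply is_CRInt_val. 2: apply (H lo); lia.
      intros; now rewrite sum_n_n. now rewrite sum_n_n.
    + eapply is_CRInt_ext. 2: eapply is_CRInt_val. 2: apply is_CRInt_plus.
      2: apply IH; [intros; apply H; lia|lia]. 2: apply (H (S (lo + d))); lia.
      intros; unfold csum; rewrite Nat.add_succ_r, sum_n_Sm by lia; reflexivity.
      unfold csum; rewrite Nat.add_succ_r, sum_n_Sm by lia; reflexivity.
  - eapply is_CRInt_ext. 2: eapply is_CRInt_val. 2: apply is_CRInt_zero.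
    intros; unfold csum; now rewrite sum_n_m_zero by lia.
    unfold csum; now rewrite sum_n_m_zero by lia.
Qed.

Lemma is_CRInt_cont f : ccont f -> is_CRInt f (CRInt f 0 (2 * PI)).
Proof.
  intros H. unfold CRInt, Re, Im. split; simpl;
  apply (RInt_correct (V:=R_CompleteNormedModule));
  apply (ex_RInt_continuous (V:=R_CompleteNormedModule)); intros; apply H.
Qed.

Lemma is_CRInt_cd F F' : cd F F' -> is_CRInt F' (Cminus (F (2 * PI)) (F 0)).
Proof.
  intros [Hd Hc]. split.
  - exact (is_RInt_derive (V:=R_CompleteNormedModule) (fun t => fst (F t)) (fun t => fst (F' t)) 0 (2*PI)
            (fun t _ => proj1 (Hd t)) (fun t _ => proj1 (Hc t))).
  - exact (is_RInt_derive (V:=R_CompleteNormedModule) (fun t => snd (F t)) (fun t => snd (F' t)) 0 (2*PI)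
            (fun t _ => proj2 (Hd t)) (fun t _ => proj2 (Hc t))).
Qed.


Lemma asin_d0 : is_derive asin 0 1.
Proof.
  assert (H : -1 < 0 < 1) by lra.
  apply is_derive_Reals. apply (derive_pt_eq_1 _ _ _ (derivable_pt_asin 0 H)).
  rewrite derive_pt_asin. replace (1 - 0²) with 1 by (unfold Rsqr; ring).
  rewrite sqrt_1. field.
Qed.

Lemma Npos (z : C) : z <> 0%C -> 0 < fst z ^ 2 + snd z ^ 2.
Proof. intros H. pose proof (Nz z H). destruct z as [a b]; simpl in *. nra. Qed.

Lemma theta_deriv (g g' : R -> C) (th : R -> R) (t : R) :
  cd g g' -> (forall s, g s <> 0%C) ->
  (forall s, 0 <= s <= 2 * PI -> continuous th s) ->
  (forall s, 0 <= s <= 2 * PI -> g s = (RtoC (Cmod (g s)) * (cos (th s), sin (th s)))%C) ->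
  0 < t < 2 * PI ->
  is_derive th t (snd (/ g t * g' t)%C).
Proof.
  intros [Hd _] Hnz Hc Heq Ht.
  set (a := fun s => fst (g s)). set (b := fun s => snd (g s)).
  set (r := fun s => Cmod (g s)).
  assert (Hab : forall s, 0 <= s <= 2 * PI -> a s = r s * cos (th s) /\ b s = r s * sin (th s)).
  { intros s Hs. unfold a, b, r. rewrite (Heq s Hs) at 1 3. simpl. split; ring. }
  assert (Hr : forall s, 0 < r s). { intros s. unfold r. apply Cmod_gt_0. auto. }
  assert (HrN : forall s, r s * r s = a s ^ 2 + b s ^ 2).
  { intros s. unfold r, a, b, Cmod. rewrite sqrt_sqrt. ring. pose proof (Npos _ (Hnz s)); lra. }
  set (h := fun s => (b s * a t - a s * b t) * / (r s * r t)).
  assert (Hloc : locally t (fun s => th t + asin (h s) = th s)).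
  { assert (Hpi2 : 0 < PI / 2) by (pose proof PI_RGT_0; lra).
    assert (L1 : locally t (fun s => ball (th t) (mkposreal (PI/2) Hpi2) (th s))).
    { apply (Hc t ltac:(lra)). apply locally_ball. }
    assert (L2 : locally t (fun s => 0 < s < 2 * PI)).
    { assert (He : 0 < Rmin t (2 * PI - t)) by (apply Rmin_pos; lra).
      exists (mkposreal _ He). intros y Hy. unfold ball in Hy; simpl in Hy.
      unfold AbsRing_ball, abs, minus, plus, opp in Hy; simpl in Hy.
      apply Rabs_def2 in Hy. pose proof (Rmin_l t (2*PI - t)). pose proof (Rmin_r t (2*PI - t)). lra. }
    eapply filter_imp; [|apply (filter_and _ _ L1 L2)].
    intros s [Hb Hs]. unfold ball in Hb; simpl in Hb.
    unfold AbsRing_ball, abs, minus, plus, opp in Hb; simpl in Hb.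
    apply Rabs_def2 in Hb.
    assert (Hhs : h s = sin (th s - th t)).
    { unfold h. destruct (Hab s ltac:(lra)) as [-> ->]. destruct (Hab t ltac:(lra)) as [-> ->].
      rewrite sin_minus. field. split; apply Rgt_not_eq, Hr. }
    cbv beta. rewrite Hhs, asin_sin by lra. lra. }
  apply (is_derive_ext_loc _ _ _ _ Hloc).
  destruct (Hd t) as [Ha Hb]. fold a b in Ha, Hb.
  assert (HN' : is_derive (fun s => a s ^ 2 + b s ^ 2) t
                   (2 * a t * fst (g' t) + 2 * b t * snd (g' t))).
  { eapply rd_ext. apply rd_plus; [apply (rd_mul _ _ t _ _ Ha Ha)|apply (rd_mul _ _ t _ _ Hb Hb)].
    intros; unfold a, b; simpl; ring. unfold a, b; simpl; ring. }
  assert (HNp : 0 < a t ^ 2 + b t ^ 2) by (apply Npos; auto).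
  assert (Hsq := is_derive_sqrt _ _ _ HN' HNp).
  assert (Hrr : is_derive (fun s => r s * r t) t
                 ((2 * a t * fst (g' t) + 2 * b t * snd (g' t)) / (2 * sqrt (a t ^ 2 + b t ^ 2)) * r t + r t * 0)).
  { eapply rd_ext. apply (rd_mul _ _ t _ _ Hsq (rd_const (r t) t)). intros; reflexivity. reflexivity. }
  assert (Hk := rd_inv _ _ _ Hrr ltac:(specialize (Hr t); nra)).
  assert (Hu : is_derive (fun s => b s * a t - a s * b t) t (snd (g' t) * a t - fst (g' t) * b t)).
  { eapply rd_ext. apply rd_plus. apply (rd_mul _ _ t _ _ Hb (rd_const (a t) t)).
    apply rd_opp. apply (rd_mul _ _ t _ _ Ha (rd_const (b t) t)).
    intros; reflexivity. match goal with |- ?x = ?y => change (@eq R x y) end; ring. }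
  assert (Hh := rd_mul _ _ t _ _ Hu Hk). fold h in Hh.
  assert (Ht0 : h t = 0) by (unfold h; ring).
  assert (Has : is_derive asin (h t) 1) by (rewrite Ht0; apply asin_d0).
  assert (Hc2 := is_derive_comp _ _ _ _ _ Has Hh).
  eapply rd_ext. apply (rd_plus _ _ t _ _ (rd_const (th t) t) Hc2). intros; reflexivity.
  unfold scal; simpl; unfold mult; simpl.
  specialize (HrN t). specialize (Hr t).
  fold a b. destruct (g' t) as [a' b']. simpl.
  replace (b t * a t - a t * b t) with 0 by ring.
  rewrite HrN. unfold a, b in *. simpl in HNp. field. split; [nra|]. apply Rgt_not_eq. apply sqrt_lt_R0. nra.
Qed.

Lemma winding (g g' : R -> C) : cd g g' -> (forall t, g t <> 0%C) -> g (2 * PI) = g 0 ->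
  winding_number_0 g 1 ->
  is_RInt (fun t => fst (/ g t * g' t)%C) 0 (2 * PI) 0 /\
  is_RInt (fun t => snd (/ g t * g' t)%C) 0 (2 * PI) (2 * PI).
Proof.
  intros Hcd Hnz Hper [_ [th [Hc [Heq Hdelta]]]].
  pose proof PI_RGT_0 as Hpi.
  assert (Hcont : ccont (fun t => (/ g t * g' t)%C)).
  { apply ccont_mult. apply ccont_inv; auto. eapply cd_ccont; eauto. eapply cd_ccont'; eauto. }
  assert (Hmin : Rmin 0 (2 * PI) = 0) by (apply Rmin_left; lra).
  assert (Hmax : Rmax 0 (2 * PI) = 2 * PI) by (apply Rmax_right; lra).
  split.
  - set (f := fun t => / 2 * ln (fst (g t) ^ 2 + snd (g t) ^ 2)).
    assert (Hf : forall t, is_derive f t (fst (/ g t * g' t)%C)).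
    { intros t. destruct Hcd as [Hd _]. destruct (Hd t) as [Ha Hb].
      assert (HN' : is_derive (fun s => fst (g s) ^ 2 + snd (g s) ^ 2) t
                   (2 * fst (g t) * fst (g' t) + 2 * snd (g t) * snd (g' t))).
      { eapply rd_ext. apply rd_plus; [apply (rd_mul _ _ t _ _ Ha Ha)|apply (rd_mul _ _ t _ _ Hb Hb)].
        intros; simpl; ring. match goal with |- ?x = ?y => change (@eq R x y) end; simpl; ring. }
      pose proof (Npos _ (Hnz t)) as HNp.
      pose proof (is_derive_comp ln _ t _ _ (is_derive_ln _ HNp) HN') as Hl.
      pose proof (is_derive_scal _ t (/2) _ Hl) as Hl2.
      eapply rd_ext. apply Hl2. intros; reflexivity.
      unfold scal; simpl; unfold mult; simpl.
      destruct (g t) as [a b]; destruct (g' t) as [a' b']; simpl in *. field. lra. }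
    pose proof (is_RInt_derive f _ 0 (2 * PI) (fun t _ => Hf t)
       (fun t _ => proj1 (Hcont t))) as HI.
    match type of HI with is_RInt _ _ _ ?v => replace v with 0 in HI end. exact HI.
    unfold f, minus, plus, opp; simpl. rewrite Hper. ring.
  - set (k := fun t => snd (/ g t * g' t)%C).
    assert (Hk : forall t, continuous k t) by (intros t; apply (Hcont t)).
    assert (Hex : forall b, ex_RInt k 0 b) by (intros b; apply (ex_RInt_continuous (V:=R_CompleteNormedModule)); intros; apply Hk).
    set (I := fun s => RInt k 0 s).
    assert (HI : forall x, is_derive I x (k x)).
    { intros x. apply (is_derive_RInt k I 0 x); [|apply Hk].
      apply filter_forall. intros b. apply (RInt_correct (V:=R_CompleteNormedModule)). apply Hex. }
    set (G := fun s => I s - th s).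
    destruct (MVT_gen G 0 (2 * PI) (fun _ => 0)) as [x [_ Hx]].
    + rewrite Hmin, Hmax. intros x Hx.
      eapply rd_ext. apply rd_plus. apply HI. apply rd_opp.
      apply (theta_deriv g g' th x Hcd Hnz Hc Heq Hx). intros; reflexivity. unfold k; simpl; lra.
    + rewrite Hmin, Hmax. intros x Hx. unfold G.
      apply (continuity_pt_minus I th). 
      * apply continuity_pt_filterlim. eapply rd_cont. apply HI.
      * apply continuity_pt_filterlim. apply Hc. auto.
    + unfold G, I in Hx. rewrite RInt_point in Hx.
      assert (E : RInt k 0 (2 * PI) = 2 * PI).
      { unfold zero in Hx; simpl in Hx. lra. }
      pose proof (RInt_correct (V:=R_CompleteNormedModule) k 0 (2 * PI) (Hex _)) as HH. rewrite E in HH. exact HH.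
Qed.


Section Main.
Variables (m n : nat) (c : sconst) (e2 e3 : alg) (rho : R) (p q : R * R * R).
Hypothesis HA : is_Anm m n c.
Hypothesis Hn4 : (n <= m + 4)%nat.
Variable Psi : R -> alg.
Hypothesis HPsi : forall t, aeq n (amul n c (zeta_C m e2 e3 rho p q t) (Psi t)) (aone m).
Hypothesis Hwind : forall u, (1 <= u <= m)%nat ->
  pos_jordan_around_0 (fun t => f_ u (zeta_C m e2 e3 rho p q t)).
Add Ring AlgRing3 : (alg_ring m n c HA) (setoid (aeq_setoid n) (aeq_ext n c)).

Definition Zt t := zeta_C m e2 e3 rho p q t.
Definition Zd t := zeta m e2 e3 (dcx rho p q t) (dcy rho p q t) (dcz rho p q t).
Definition Iof (a : alg) : alg := fun k => if Nat.leb k m then (/ a k)%C else 0%C.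
Definition Dof (a : alg) : alg := fun k => if Nat.leb k m then a k else 0%C.
Definition Wof (a : alg) : alg := asub (amul n c (Iof a) a) (aone m).
Definition n2 := aadd (aone m) (aone m).
Definition n3 := aadd n2 (aone m).
Definition n4 := aadd n2 n2.
Definition n6 := aadd n3 n3.
Definition n12 := aadd n6 n6.
Definition pw2 (W : alg) := amul n c W W.
Definition pw3 (W : alg) := amul n c (pw2 W) W.
Definition pw4 (W : alg) := amul n c (pw3 W) W.
Definition Mexp (W : alg) : alg :=
  asub (asub (aadd (amul n c n12 W) (amul n c n4 (pw3 W))) (amul n c n6 (pw2 W))) (amul n c n3 (pw4 W)).
Definition Mof (a : alg) := Mexp (Wof a).
Definition Dinv t := Iof (Zt t).
Definition Dinv' t : alg := fun k => if Nat.leb k m then (- Zd t k / (Zt t k * Zt t k))%C else 0%C.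
Definition W t := Wof (Zt t).
Definition W' t := aadd (amul n c (Dinv' t) (Zt t)) (amul n c (Dinv t) (Zd t)).
Definition Sx (W : alg) := aadd (aone m) (aadd (aopp W) (aadd (amul n c W W)
       (aopp (amul n c (amul n c W W) W)))).
Definition Phi t := amul n c (Dinv t) (aadd (aone m) (aadd (aopp (W t)) (aadd (amul n c (W t) (W t))
       (aadd (aopp (amul n c (amul n c (W t) (W t)) (W t)))
             (amul n c (amul n c (amul n c (W t) (W t)) (W t)) (W t)))))).
Definition P t := amul n c (Sx (W t)) (W' t).
Definition E t := amul n c (Dinv t) (Dof (Zd t)).

Lemma Znz t k : (1 <= k <= m)%nat -> Zt t k <> 0%C.
Proof.
  intros Hk E0. pose proof (Hmn m n c HA).
  specialize (HPsi t k ltac:(lia)). rewrite (mulS m n c HA) in HPsi by lia.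
  unfold Zt in E0. rewrite E0, Cmult_0_l in HPsi. unfold aone in HPsi.
  destruct (Nat.leb_spec k m); [|lia]. injection HPsi. lra.
Qed.

Lemma acd_Z : acd n Zt Zd.
Proof.
  intros k Hk. unfold Zt, Zd, zeta_C, zeta, aadd, ascal.
  destruct p as [[p1 p2] p3], q as [[q1 q2] q3]. simpl.
  eapply cd_ext.
  - apply cd_plus. apply cd_mult. apply trig_cd. apply cd_const.
    apply cd_plus. apply cd_mult. apply trig_cd. apply cd_const.
    apply cd_mult. apply trig_cd. apply cd_const.
  - reflexivity.
  - intros t. simpl. ring.
Qed.

Lemma acd_Dinv : acd n Dinv Dinv'.
Proof.
  intros k Hk. unfold Dinv, Dinv', Iof.
  destruct (Nat.leb_spec k m).
  - apply cd_inv. apply (acd_Z k Hk). intros; apply Znz; lia.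
  - apply cd_const.
Qed.

Lemma acd_W : acd n W W'.
Proof.
  eapply acd_ext.
  - apply acd_add. apply (acd_mul n c). apply acd_Dinv. apply acd_Z. apply acd_opp. apply (acd_const n (aone m)).
  - intros t. reflexivity.
  - intros t. unfold W'. ring.
Qed.

Lemma acd_M : acd n (fun t => Mof (Zt t)) (fun t => amul n c n12 (P t)).
Proof.
  pose proof acd_W as HW.
  assert (H2 : acd n (fun t => pw2 (W t)) (fun t => aadd (amul n c (W' t) (W t)) (amul n c (W t) (W' t)))).
  { apply (acd_mul n c); auto. }
  assert (H3 : acd n (fun t => pw3 (W t))
     (fun t => aadd (amul n c (aadd (amul n c (W' t) (W t)) (amul n c (W t) (W' t))) (W t))
                    (amul n c (pw2 (W t)) (W' t)))).
  { apply (acd_mul n c _ _ _ _ H2 HW). }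
  assert (H4 := acd_mul n c _ _ _ _ H3 HW).
  eapply acd_ext.
  - apply acd_add. apply acd_add. apply acd_add.
    apply (acd_mul n c _ _ _ _ (acd_const n n12) HW).
    apply (acd_mul n c _ _ _ _ (acd_const n n4) H3).
    apply acd_opp. apply (acd_mul n c _ _ _ _ (acd_const n n6) H2).
    apply acd_opp. apply (acd_mul n c _ _ _ _ (acd_const n n3) H4).
  - intros t. reflexivity.
  - intros t. cbv beta. unfold P, Sx, pw4, pw3, pw2, n12, n6, n4, n3, n2, asub. ring.
Qed.

Lemma suppS_Iof a : suppS m (Iof a).
Proof. intros k Hk. unfold Iof. destruct (Nat.leb_spec k m); [lia|reflexivity]. Qed.
Lemma suppS_Dof a : suppS m (Dof a).
Proof. intros k Hk. unfold Dof. destruct (Nat.leb_spec k m); [lia|reflexivity]. Qed.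
Lemma suppS_Dinv' t : suppS m (Dinv' t).
Proof. intros k Hk. unfold Dinv'. destruct (Nat.leb_spec k m); [lia|reflexivity]. Qed.

Lemma H1t t : aeq n (amul n c (Dof (Zt t)) (Dinv t)) (aone m).
Proof.
  intros k Hk. destruct (le_lt_dec k m).
  - rewrite (mulS m n c HA) by lia. unfold Dof, Dinv, Iof, aone.
    destruct (Nat.leb_spec k m); [|lia]. field. apply Znz; lia.
  - rewrite (prodS m n c HA); [| apply suppS_Dof | apply suppS_Iof | lia].
    unfold aone. destruct (Nat.leb_spec k m); [lia|reflexivity].
Qed.

Lemma H2t t : aeq n (aadd (amul n c (Dof (Zd t)) (Dinv t)) (amul n c (Dof (Zt t)) (Dinv' t))) azero.
Proof.
  intros k Hk. unfold aadd, azero. destruct (le_lt_dec k m).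
  - rewrite !(mulS m n c HA) by lia. unfold Dof, Dinv, Dinv', Iof.
    destruct (Nat.leb_spec k m); [|lia]. field. apply Znz; lia.
  - rewrite !(prodS m n c HA); try (apply suppS_Dof || apply suppS_Iof || apply suppS_Dinv'); try lia.
    ring.
Qed.

Lemma inN_W t : inN m (W t).
Proof.
  intros k Hk. pose proof (Hmn m n c HA). unfold W, Wof, asub, aadd, aopp.
  rewrite (mulS m n c HA) by lia. unfold Iof, aone.
  destruct (Nat.leb_spec k m); [|lia]. field. apply Znz; lia.
Qed.

Lemma inN_W' t : inN m (W' t).
Proof.
  intros k Hk. pose proof (Hmn m n c HA). unfold W', aadd.
  rewrite !(mulS m n c HA) by lia. unfold Dinv, Dinv', Iof.
  destruct (Nat.leb_spec k m); [|lia]. field. apply Znz; lia.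
Qed.

Lemma key_t t : aeq n (amul n c (Zt t) (Phi t)) (aone m) /\
  aeq n (amul n c (Phi t) (Zd t)) (aadd (E t) (P t)).
Proof.
  assert (H5 := pow5 m n c HA (W t) (W t) Hn4 (inN_W t) (inN_W t)).
  assert (H5' := pow5 m n c HA (W' t) (W t) Hn4 (inN_W' t) (inN_W t)).
  destruct (key m n c HA (Dof (Zt t)) (Dinv t) (Dof (Zd t)) (Dinv' t) (Zt t) (Zd t) (W t) (W' t) (Phi t)
    (H1t t) (H2t t) ltac:(reflexivity) ltac:(reflexivity) H5 H5' ltac:(reflexivity)) as [K1 K2].
  split; auto.
Qed.

Lemma Psi_Phi t : aeq n (Psi t) (Phi t).
Proof.
  destruct (key_t t) as [K1 _].
  transitivity (amul n c (amul n c (Zt t) (Phi t)) (Psi t)). { rewrite K1. ring. }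
  transitivity (amul n c (amul n c (Zt t) (Psi t)) (Phi t)). { ring. }
  unfold Zt. rewrite HPsi. ring.
Qed.

Lemma integrand t : aeq n (amul n c (Psi t) (Zd t)) (aadd (E t) (P t)).
Proof. rewrite Psi_Phi. apply key_t. Qed.


Lemma acd_Phi : exists Phi', acd n Phi Phi'.
Proof.
  pose proof acd_W as HW.
  pose proof (acd_mul n c _ _ _ _ HW HW) as H2.
  pose proof (acd_mul n c _ _ _ _ H2 HW) as H3.
  pose proof (acd_mul n c _ _ _ _ H3 HW) as H4.
  pose proof (acd_add _ _ _ _ _ (acd_const n (aone m)) (acd_add _ _ _ _ _ (acd_opp _ _ _ HW)
     (acd_add _ _ _ _ _ H2 (acd_add _ _ _ _ _ (acd_opp _ _ _ H3) H4)))) as HS.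
  eexists. exact (acd_mul n c _ _ _ _ acd_Dinv HS).
Qed.

Lemma ccont_Psi s : (1 <= s <= n)%nat -> ccont (fun t => Psi t s).
Proof.
  intros Hs. destruct acd_Phi as [Phi' HP].
  eapply ccont_ext. apply (cd_ccont _ _ (HP s Hs)). intros t. symmetry. now apply Psi_Phi.
Qed.

Lemma dc_cont : (forall t, continuous (dcx rho p q) t) /\ (forall t, continuous (dcy rho p q) t) /\ (forall t, continuous (dcz rho p q) t).
Proof.
  destruct p as [[p1 p2] p3], q as [[q1 q2] q3]. simpl.
  split; [|split]; intros t; eapply rd_cont; apply trig_d'.
Qed.

Lemma piece (e : alg) (x' : R -> R) k : (forall t, continuous x' t) -> (1 <= k <= n)%nat ->
  is_CRInt (fun t => (RtoC (x' t) * amul n c e (Psi t) k)%C)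
    (amul n c e (fun s => CRInt (fun t => (Psi t s * RtoC (x' t))%C) 0 (2 * PI)) k).
Proof.
  intros Hx Hk. unfold amul.
  eapply is_CRInt_ext; [|eapply is_CRInt_val].
  2:{ apply (is_CRInt_csum (fun r t => csum (fun s => (e r * c r s k) * (Psi t s * RtoC (x' t)))%C 1 n)
       (fun r => csum (fun s => (e r * c r s k) * CRInt (fun t => (Psi t s * RtoC (x' t))%C) 0 (2 * PI))%C 1 n)).
    intros r Hr.
    apply (is_CRInt_csum (fun s t => (e r * c r s k) * (Psi t s * RtoC (x' t)))%C).
    intros s Hs. apply is_CRInt_cmul. apply is_CRInt_cont.
    apply ccont_mult. now apply ccont_Psi. now apply ccont_real. }
  - intros t. rewrite <- csum_mult_l. apply csum_ext; intros.
    rewrite <- csum_mult_l. apply csum_ext; intros. ring.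
  - apply csum_ext; intros. apply csum_ext; intros. ring.
Qed.

Lemma amul_ascal_r a x b k : amul n c a (ascal x b) k = (RtoC x * amul n c a b k)%C.
Proof.
  unfold amul, ascal. rewrite <- csum_mult_l. apply csum_ext; intros.
  rewrite <- csum_mult_l. apply csum_ext; intros. ring.
Qed.
Lemma amul_addr a b d k : amul n c a (aadd b d) k = (amul n c a b k + amul n c a d k)%C.
Proof.
  unfold amul, aadd. rewrite <- csum_plus. apply csum_ext; intros.
  rewrite <- csum_plus. apply csum_ext; intros. ring.
Qed.

Lemma decomp k : (1 <= k <= n)%nat ->
  is_CRInt (fun t => amul n c (Psi t) (Zd t) k) (curve_integral n c e2 e3 rho p q Psi k).
Proof.
  intros Hk. destruct dc_cont as [Cx [Cy Cz]].
  unfold curve_integral. cbv zeta. unfold aadd at 1 2.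
  assert (C1 : ccont (fun t => (Psi t k * RtoC (dcx rho p q t))%C)).
  { apply ccont_mult. now apply ccont_Psi. now apply ccont_real. }
  pose proof (is_CRInt_cont _ C1) as I1.
  pose proof (piece e2 _ k Cy Hk) as I2. pose proof (piece e3 _ k Cz Hk) as I3.
  eapply is_CRInt_ext; [|exact (is_CRInt_plus _ _ _ _ I1 (is_CRInt_plus _ _ _ _ I2 I3))].
  intros t. unfold Zd, zeta. rewrite !amul_addr, !amul_ascal_r.
  assert (E1 : aeq n (amul n c (Psi t) (aone m)) (Psi t)) by ring.
  assert (E2 : aeq n (amul n c (Psi t) e2) (amul n c e2 (Psi t))) by ring.
  assert (E3 : aeq n (amul n c (Psi t) e3) (amul n c e3 (Psi t))) by ring.
  rewrite (E1 k Hk), (E2 k Hk), (E3 k Hk). ring.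
Qed.

Lemma Zper : Zt (2 * PI) = Zt 0.
Proof.
  unfold Zt, zeta_C.
  assert (Hx : cx rho p q (2 * PI) = cx rho p q 0) by
    (destruct p as [[? ?] ?], q as [[? ?] ?]; simpl; rewrite cos_2PI, sin_2PI, cos_0, sin_0; ring).
  assert (Hy : cy rho p q (2 * PI) = cy rho p q 0) by
    (destruct p as [[? ?] ?], q as [[? ?] ?]; simpl; rewrite cos_2PI, sin_2PI, cos_0, sin_0; ring).
  assert (Hz : cz rho p q (2 * PI) = cz rho p q 0) by
    (destruct p as [[? ?] ?], q as [[? ?] ?]; simpl; rewrite cos_2PI, sin_2PI, cos_0, sin_0; ring).
  now rewrite Hx, Hy, Hz.
Qed.

Lemma E_int k : (1 <= k <= n)%nat -> is_CRInt (fun t => E t k) (cscal (0, 2 * PI) (aone m) k).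
Proof.
  intros Hk. destruct (le_lt_dec k m).
  - destruct (Hwind k ltac:(lia)) as [_ Hw].
    destruct (winding (fun t => Zt t k) (fun t => Zd t k) (acd_Z k Hk)
      (fun t => Znz t k ltac:(lia)) ltac:(cbv beta; now rewrite Zper) Hw) as [W1 W2].
    assert (IW : is_CRInt (fun t => (/ Zt t k * Zd t k)%C) (0, 2 * PI)) by (split; assumption).
    eapply is_CRInt_ext; [|eapply is_CRInt_val; [exact IW|]].
    + intros t. unfold E. rewrite (mulS m n c HA) by lia. unfold Dinv, Iof, Dof.
      destruct (Nat.leb_spec k m); [reflexivity|lia].
    + unfold cscal, aone. destruct (Nat.leb_spec k m); [|lia].
      unfold Cmult; simpl. f_equal; ring.
  - eapply is_CRInt_ext; [|eapply is_CRInt_val; [apply is_CRInt_zero|]].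
    + intros t. unfold E. symmetry. apply (prodS m n c HA); [apply suppS_Iof|apply suppS_Dof|lia].
    + unfold cscal, aone. destruct (Nat.leb_spec k m); [lia|]. now rewrite Cmult_0_r.
Qed.

Lemma n12_coord X k : (1 <= k <= n)%nat -> amul n c n12 X k = (RtoC 12 * X k)%C.
Proof.
  intros Hk.
  assert (H : aeq n (amul n c n12 X) (aadd X (aadd X (aadd X (aadd X (aadd X (aadd X
     (aadd X (aadd X (aadd X (aadd X (aadd X X)))))))))))).
  { unfold n12, n6, n3, n2. ring. }
  rewrite (H k Hk). unfold aadd. destruct (X k) as [a b].
  unfold Cplus, Cmult; simpl. f_equal; ring.
Qed.

Lemma P_int k : (1 <= k <= n)%nat -> is_CRInt (fun t => P t k) 0%C.
Proof.
  intros Hk.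
  assert (Hc : cd (fun t => (RtoC (/ 12) * Mof (Zt t) k)%C) (fun t => P t k)).
  { eapply cd_ext. apply cd_mult. apply cd_const. apply (acd_M k Hk).
    reflexivity. intros t. cbv beta. rewrite n12_coord by auto.
    destruct (P t k) as [a b]. unfold Cplus, Cmult; simpl. f_equal; field. }
  eapply is_CRInt_val. apply (is_CRInt_cd _ _ Hc).
  rewrite Zper. destruct (RtoC (/ 12) * Mof (Zt 0) k)%C as [a b].
  unfold Cminus, Cplus, Copp; apply injective_projections; simpl; ring.
Qed.

Lemma main_coord k : (1 <= k <= n)%nat ->
  curve_integral n c e2 e3 rho p q Psi k = cscal (0, 2 * PI) (aone m) k.
Proof.
  intros Hk. apply (is_CRInt_uniq _ _ _ (decomp k Hk)).
  eapply is_CRInt_ext; [|eapply is_CRInt_val; [apply (is_CRInt_plus _ _ _ _ (E_int k Hk) (P_int k Hk))|]].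
  - intros t. symmetry. apply (integrand t k Hk).
  - apply Cplus_0_r.
Qed.

End Main.

Theorem theorem8 (m n : nat) (c : sconst) (e2 e3 : alg) :
  n = (m + 4)%nat ->
  is_Anm m n c ->
  (* e1 = 1, e2, e3 linearly independent over R *)
  (forall x y z : R, aeq n (zeta m e2 e3 x y z) (fun _ => 0%C) -> x = 0 /\ y = 0 /\ z = 0) ->
  (* standing assumption: f_u(E_3) = C for all u = 1..m *)
  (forall u, (1 <= u <= m)%nat ->
     forall w : C, exists x y z : R, f_ u (zeta m e2 e3 x y z) = w) ->
  (* hypotheses on the structure constants *)
  let U := Ups c in
  let i1 := (m + 1)%nat in let i2 := (m + 2)%nat in
  let i3 := (m + 3)%nat in let i4 := (m + 4)%nat in
  (U i1 i1 i2 * U i2 i2 i3 = 0)%C ->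
  (U i1 i1 i2 * U i2 i2 i4 = 0)%C ->
  (U i1 i1 i3 * U i2 i3 i4 = 0)%C ->
  (U i3 i3 i4 * U i1 i1 i3 = 0)%C ->
  (U i1 i2 i3 * U i1 i3 i4 = 0)%C ->
  (U i1 i2 i3 * U i2 i3 i4 = 0)%C ->
  (U i1 i2 i3 * U i3 i3 i4 = 0)%C ->
  (U i1 i1 i2 * U i1 i2 i3 * U i2 i3 i4 = 0)%C ->
  (U i1 i1 i2 * U i1 i2 i3 * U i3 i3 i4 = 0)%C ->
  (U i2 i2 i3 * U i1 i3 i4 = 0)%C ->
  (U i2 i2 i3 * U i3 i3 i4 = 0)%C ->
  (U i2 i2 i3 * U i1 i1 i2 * U i1 i3 i4 = 0)%C ->
  (U i2 i2 i3 * U i1 i1 i2 * U i2 i3 i4 = 0)%C ->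
  (U i2 i2 i3 * U i1 i1 i2 * U i3 i3 i4 = 0)%C ->
  (* for every circle C as in the context *)
  forall (rho : R) (p q : R * R * R),
    0 < rho -> orthonormal p q ->
    (forall u, (1 <= u <= m)%nat ->
       pos_jordan_around_0 (fun t => f_ u (zeta_C m e2 e3 rho p q t))) ->
    (* Psi t = zeta(t)^{-1} *)
    forall Psi : R -> alg,
      (forall t, aeq n (amul n c (zeta_C m e2 e3 rho p q t) (Psi t)) (aone m)) ->
      aeq n (curve_integral n c e2 e3 rho p q Psi)
            (cscal (0, 2 * PI) (aone m)).

Proof.
  intros Hn HA Hind Hstd U i1 i2 i3 i4 _ _ _ _ _ _ _ _ _ _ _ _ _ _ rho p q Hrho Hon Hwind Psi HPsi.
  intros k Hk. subst n.
  apply (main_coord m (m + 4) c e2 e3 rho p q HA (le_n _) Psi HPsi Hwind k Hk).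
Qed.
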